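(* For every integer $d \ge 0$, \[ \lambda_\infty^d \;=\; \frac{1}{d!}\cdot\begin{cases} T_d, & d \text{ odd},\\ E_d, & d \text{ even},\end{cases} \] where $\lambda_\infty^d := t_0^d + 2\sum_{j=1}^{r}(-1)^j t_j^d$ with $r=\lfloor d/2\rfloor$ and $t_j^d := N^d\!\left(j+\frac{d+1}{2}\right)$.
   Context: Truncated powers: for $d>0$, $(x-i)_+^d = (x-i)^d$ if $x\ge i$ and $0$ otherwise; $(x-i)_+^0 = 1$ if $x \ge i$ and $0$ if $x<i$. The normalized cardinal B-spline of degree $d$ (with simple knots $0,1,\dots,d+1$) is $N^d(x) = \frac{1}{d!}\sum_{i=0}^{d+1}(-1)^i\binom{d+1}{i}(x-i)_+^d$. The tangent numbers $T_n$ and Euler numbers $E_n$ are defined by $\tan t = \sum_{n\ge 0} T_n \frac{t^n}{n!}$ and $\sec t = \sum_{n\ge0} E_n\frac{t^n}{n!}$. *)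

(* Defs.v *)
From Stdlib Require Import Reals Lra Lia Arith.
Open Scope R_scope.

(* truncated power (x - i)_+^d ; for d = 0 this is 1 if x >= i and 0 otherwise *)
Definition tpow (x : R) (i d : nat) : R :=
  if Rle_dec (INR i) x then (x - INR i) ^ d else 0.

(* normalized cardinal B-spline of degree d with knots 0,1,...,d+1 *)
Definition Bspl (d : nat) (x : R) : R :=
  / INR (fact d) *
  sum_f_R0 (fun i => (-1) ^ i * C (S d) i * tpow x i d) (S d).

Fixpoint sum_1_to (f : nat -> R) (r : nat) : R :=
  match r with
  | O => 0
  | S k => sum_1_to f k + f (S k)
  end.

Definition tcoef (d j : nat) : R := Bspl d (INR j + (INR d + 1) / 2).

Definition lambda_inf (d : nat) : R :=
  tcoef d 0 + 2 * sum_1_to (fun j => (-1) ^ j * tcoef d j) (Nat.div2 d).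

Definition is_tangent_numbers (T : nat -> R) : Prop :=
  exists rho, 0 < rho /\ forall t, Rabs t < rho ->
    infinite_sum (fun n => T n * t ^ n / INR (fact n)) (tan t).

Definition is_euler_numbers (E : nat -> R) : Prop :=
  exists rho, 0 < rho /\ forall t, Rabs t < rho ->
    infinite_sum (fun n => E n * t ^ n / INR (fact n)) (/ cos t).

(* Main.v *)
Require Import Defs.
From Stdlib Require Import Reals Lra Lia Arith Ratan.
Open Scope R_scope.

Lemma sum_front (f : nat -> R) n :
  sum_f_R0 f (S n) = f 0%nat + sum_f_R0 (fun i => f (S i)) n.
Proof.
  induction n.
  - simpl. ring.
  - rewrite tech5, IHn, tech5. ring.
Qed.

Lemma sum_swap (f : nat -> nat -> R) n m :
  sum_f_R0 (fun i => sum_f_R0 (fun j => f i j) m) n =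
  sum_f_R0 (fun j => sum_f_R0 (fun i => f i j) n) m.
Proof.
  induction n.
  - simpl. reflexivity.
  - rewrite tech5, IHn, <- sum_plus. apply sum_eq; intros. rewrite tech5. reflexivity.
Qed.

Lemma sum_rev (f : nat -> R) n :
  sum_f_R0 f n = sum_f_R0 (fun i => f (n - i)%nat) n.
Proof.
  induction n.
  - simpl. reflexivity.
  - rewrite tech5, IHn. rewrite (sum_front (fun i => f (S n - i)%nat)).
    rewrite Nat.sub_0_r. rewrite Rplus_comm. f_equal.
Qed.

Lemma sum_zero_tail (f : nat -> R) k n :
  (k <= n)%nat -> (forall i, (k < i <= n)%nat -> f i = 0) ->
  sum_f_R0 f n = sum_f_R0 f k.
Proof.
  intros Hk H. induction n.
  - replace k with 0%nat by lia. reflexivity.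
  - destruct (Nat.eq_dec k (S n)) as [->|Hne]; [reflexivity|].
    rewrite tech5, H by lia. rewrite IHn by (try lia; intros; apply H; lia). ring.
Qed.

Lemma sum_0 (f : nat -> R) n : (forall i, (i <= n)%nat -> f i = 0) -> sum_f_R0 f n = 0.
Proof.
  intros H. induction n.
  - simpl. apply H. lia.
  - rewrite tech5, IHn, H by (try lia; intros; apply H; lia). ring.
Qed.

Lemma sum_scal_l (f : nat -> R) c n :
  sum_f_R0 (fun i => c * f i) n = c * sum_f_R0 f n.
Proof. rewrite scal_sum. apply sum_eq. intros. ring. Qed.

Lemma sum_nonneg (g : nat -> R) N : (forall j, 0 <= g j) -> 0 <= sum_f_R0 g N.
Proof. intros Hg. induction N; simpl; [apply Hg|]. specialize (Hg (S N)). lra. Qed.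

Lemma term_le_sum (g : nat -> R) N i :
  (forall j, 0 <= g j) -> (i <= N)%nat -> g i <= sum_f_R0 g N.
Proof.
  intros Hg Hi. induction N.
  - replace i with 0%nat by lia. simpl. lra.
  - rewrite tech5. destruct (Nat.eq_dec i (S N)) as [->|Hne].
    + assert (0 <= sum_f_R0 g N) by (apply sum_nonneg; auto).
      specialize (Hg (S N)). lra.
    + specialize (IHN ltac:(lia)). specialize (Hg (S N)). lra.
Qed.

Lemma alt_shift (a : nat -> R) n :
  sum_f_R0 (fun k => (-1)^k * a (S k)) n =
  a 0%nat - sum_f_R0 (fun k => (-1)^k * a k) (S n).
Proof.
  rewrite sum_front. simpl pow.
  assert (sum_f_R0 (fun i => -1 * (-1) ^ i * a (S i)) n =
          - sum_f_R0 (fun k => (-1)^k * a (S k)) n).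
  { replace (- sum_f_R0 (fun k => (-1)^k * a (S k)) n) with
     (-1 * sum_f_R0 (fun k => (-1)^k * a (S k)) n) by ring.
    rewrite <- (sum_scal_l _ (-1)). apply sum_eq. intros. ring. }
  rewrite H. ring.
Qed.

Lemma neg1_pow_sq n : (-1)^n * (-1)^n = 1.
Proof. rewrite <- Rpow_mult_distr. replace (-1 * -1) with 1 by ring. apply pow1. Qed.

Lemma neg1_pow_minus n i : (i <= n)%nat -> (-1)^(n - i) = (-1)^n * (-1)^i.
Proof.
  intros H. replace ((-1)^n) with ((-1)^(n-i) * (-1)^i).
  - rewrite Rmult_assoc, neg1_pow_sq. ring.
  - rewrite <- pow_add. f_equal. lia.
Qed.

Fixpoint cb (n k : nat) : R :=
  match n, k with
  | _, O => 1
  | O, S _ => 0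
  | S n', S k' => cb n' k' + cb n' (S k')
  end.

Lemma cb_n0 n : cb n 0 = 1.
Proof. destruct n; reflexivity. Qed.

Lemma cb_gt n k : (n < k)%nat -> cb n k = 0.
Proof.
  revert k; induction n; intros k H.
  - destruct k; [lia|reflexivity].
  - destruct k; [lia|]. simpl. rewrite !IHn by lia. ring.
Qed.

Lemma C_0 n : C n 0 = 1.
Proof. unfold C. rewrite Nat.sub_0_r. simpl. field. apply INR_fact_neq_0. Qed.
Lemma C_nn n : C n n = 1.
Proof. unfold C. rewrite Nat.sub_diag. simpl. field. apply INR_fact_neq_0. Qed.

Lemma cb_C n k : (k <= n)%nat -> cb n k = C n k.
Proof.
  revert k; induction n; intros k H.
  - replace k with 0%nat by lia. simpl. rewrite C_0. reflexivity.
  - destruct k.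
    + simpl. rewrite C_0. reflexivity.
    + simpl. destruct (Nat.eq_dec k n) as [->|Hne].
      * rewrite (cb_gt n (S n)) by lia. rewrite IHn by lia. rewrite !C_nn. ring.
      * rewrite !IHn by lia. apply pascal. lia.
Qed.

Lemma cb_sum n : sum_f_R0 (fun k => cb n k) n = 2 ^ n.
Proof.
  induction n.
  - simpl. ring.
  - rewrite sum_front. simpl cb.
    rewrite sum_plus. assert (H1 : sum_f_R0 (cb n) n = 2^n) by exact IHn. rewrite H1.
    assert (sum_f_R0 (fun i => cb n (S i)) n = 2^n - 1).
    { pose proof (tech5 (fun k => cb n k) n) as HT. rewrite sum_front in HT.
      rewrite (cb_gt n (S n)) in HT by lia. rewrite IHn, cb_n0 in HT. lra. }
    rewrite H. simpl. ring.
Qed.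

Lemma sum_opp (f : nat -> R) n : sum_f_R0 (fun i => - f i) n = - sum_f_R0 f n.
Proof. induction n; simpl; [ring|]. rewrite IHn. ring. Qed.

Lemma delta_step (g : nat -> R) n :
  sum_f_R0 (fun i => (-1)^i * cb (S n) i * g i) (S n) =
  sum_f_R0 (fun i => (-1)^i * cb n i * (g i - g (S i))) n.
Proof.
  rewrite sum_front. simpl cb. simpl pow.
  assert (E1: sum_f_R0 (fun i => -1 * (-1) ^ i * (cb n i + cb n (S i)) * g (S i)) n =
    - sum_f_R0 (fun i => (-1) ^ i * cb n i * g (S i)) n
    - sum_f_R0 (fun i => (-1) ^ i * cb n (S i) * g (S i)) n).
  { rewrite <- sum_opp, <- minus_sum. apply sum_eq; intros. ring. }
  rewrite E1.
  assert (E2: sum_f_R0 (fun i => (-1) ^ i * cb n (S i) * g (S i)) n =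
     g 0%nat - sum_f_R0 (fun i => (-1) ^ i * cb n i * g i) n).
  { pose proof (alt_shift (fun k => cb n k * g k) n) as A.
    rewrite tech5, (cb_gt n (S n)) in A by lia.
    replace (sum_f_R0 (fun i => (-1) ^ i * cb n (S i) * g (S i)) n) with
      (sum_f_R0 (fun k => (-1) ^ k * (cb n (S k) * g (S k))) n) by (apply sum_eq; intros; ring).
    rewrite A, cb_n0. replace (sum_f_R0 (fun i => (-1) ^ i * cb n i * g i) n) with
      (sum_f_R0 (fun k => (-1) ^ k * (cb n k * g k)) n) by (apply sum_eq; intros; ring). ring. }
  rewrite E2.
  assert (E3: sum_f_R0 (fun i => (-1) ^ i * cb n i * (g i - g (S i))) n =
     sum_f_R0 (fun i => (-1) ^ i * cb n i * g i) n - sum_f_R0 (fun i => (-1) ^ i * cb n i * g (S i)) n).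
  { rewrite <- minus_sum. apply sum_eq. intros. ring. }
  rewrite E3. ring.
Qed.

Lemma pow_succ_diff (w : R) e :
  (w + 1) ^ (S e) - w ^ (S e) = sum_f_R0 (fun l => C (S e) l * w ^ l) e.
Proof.
  rewrite binomial, tech5, C_nn, Nat.sub_diag.
  replace (sum_f_R0 (fun i => C (S e) i * w ^ i * 1 ^ (S e - i)) e) with
    (sum_f_R0 (fun l => C (S e) l * w ^ l) e) by (apply sum_eq; intros; rewrite pow1; ring).
  simpl pow at 3. ring.
Qed.

Lemma delta_poly n : forall e z, (e < n)%nat ->
  sum_f_R0 (fun i => (-1)^i * cb n i * (z - INR i)^e) n = 0.
Proof.
  induction n; intros e z He; [lia|].
  rewrite (delta_step (fun i => (z - INR i)^e)).
  destruct e as [|e].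
  - apply sum_0. intros. simpl. ring.
  - transitivity (sum_f_R0 (fun i => (-1)^i * cb n i *
        sum_f_R0 (fun l => C (S e) l * ((z - 1) - INR i) ^ l) e) n).
    { apply sum_eq. intros i _. rewrite <- pow_succ_diff. rewrite S_INR.
      replace (z - 1 - INR i + 1) with (z - INR i) by ring.
      replace (z - (INR i + 1)) with (z - 1 - INR i) by ring. reflexivity. }
    transitivity (sum_f_R0 (fun l => C (S e) l *
        sum_f_R0 (fun i => (-1)^i * cb n i * ((z - 1) - INR i) ^ l) n) e).
    { pose proof (sum_swap (fun i l => (-1)^i * cb n i * (C (S e) l * ((z - 1) - INR i) ^ l)) n e) as SW.
      cbv beta in SW.
      transitivity (sum_f_R0 (fun i => sum_f_R0 (fun l => (-1)^i * cb n i * (C (S e) l * ((z - 1) - INR i) ^ l)) e) n).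
      { apply sum_eq. intros. rewrite <- sum_scal_l. reflexivity. }
      rewrite SW. apply sum_eq. intros. rewrite <- sum_scal_l. apply sum_eq. intros. ring. }
    apply sum_0. intros l Hl. rewrite IHn by lia. ring.
Qed.

Definition psi (D e k : nat) (x : R) : R :=
  sum_f_R0 (fun i => (-1)^i * cb (S D) i * (x + INR k - INR i)^e / INR (fact e)) k.
Definition Psi (D e : nat) (x : R) : R := sum_f_R0 (fun k => (-1)^k * psi D e k x) D.
Definition P (d : nat) (x : R) : R := Psi d d x.

Lemma cb_SS n k : cb (S n) (S k) = cb n k + cb n (S k).
Proof. reflexivity. Qed.

Lemma psi_vanish D e x : (e <= D)%nat -> psi D e (S D) x = 0.
Proof.
  intros H. unfold psi.
  transitivity (/ INR (fact e) * sum_f_R0 (fun i => (-1)^i * cb (S D) i * ((x + INR (S D)) - INR i)^e) (S D)).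
  - rewrite <- sum_scal_l. apply sum_eq. intros. unfold Rdiv. ring.
  - rewrite delta_poly by lia. ring.
Qed.

Lemma psi_step0 D e x : psi (S D) e 0 x = psi D e 0 x.
Proof. unfold psi. simpl. reflexivity. Qed.

Lemma psi_stepS D e k x : psi (S D) e (S k) x = psi D e (S k) x - psi D e k x.
Proof.
  unfold psi. rewrite !sum_front. rewrite !cb_n0.
  transitivity ((-1) ^ 0 * 1 * (x + INR (S k) - INR 0) ^ e / INR (fact e) +
     (sum_f_R0 (fun i => (-1) ^ S i * cb (S D) (S i) * (x + INR (S k) - INR (S i)) ^ e / INR (fact e)) k
      - sum_f_R0 (fun i => (-1) ^ i * cb (S D) i * (x + INR k - INR i) ^ e / INR (fact e)) k)).
  - f_equal. rewrite <- minus_sum. apply sum_eq. intros i _. rewrite cb_SS.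
    rewrite !S_INR. simpl pow. unfold Rdiv.
    replace (x + (INR k + 1) - (INR i + 1)) with (x + INR k - INR i) by ring. ring.
  - ring.
Qed.

Lemma Psi_step D e x : (e <= D)%nat -> Psi (S D) e x = 2 * Psi D e x.
Proof.
  intros H. unfold Psi. rewrite sum_front. rewrite psi_step0.
  transitivity ((-1)^0 * psi D e 0 x +
    (- sum_f_R0 (fun k => (-1)^k * psi D e (S k) x) D + sum_f_R0 (fun k => (-1)^k * psi D e k x) D)).
  - f_equal. rewrite <- sum_opp, <- sum_plus. apply sum_eq. intros i _.
    rewrite psi_stepS. simpl pow. ring.
  - rewrite (alt_shift (fun k => psi D e k x)). rewrite tech5, psi_vanish by lia. simpl pow. ring.
Qed.

Lemma Psi_pow m e x : Psi (e + m) e x = 2 ^ m * P e x.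
Proof.
  induction m.
  - rewrite Nat.add_0_r. unfold P. simpl. ring.
  - rewrite Nat.add_succ_r, Psi_step by lia. rewrite IHm. simpl. ring.
Qed.

Lemma binom_fact h w d :
  (h + w)^d / INR (fact d) =
  sum_f_R0 (fun l => h^l / INR (fact l) * (w^(d-l) / INR (fact (d-l)))) d.
Proof.
  rewrite binomial. unfold Rdiv. rewrite Rmult_comm, <- sum_scal_l.
  apply sum_eq. intros l Hl. unfold C.
  field. repeat split; apply INR_fact_neq_0.
Qed.

Lemma taylor d x h :
  P d (x + h) = sum_f_R0 (fun l => (2*h)^l / INR (fact l) * P (d - l) x) d.
Proof.
  unfold P at 1. unfold Psi, psi.
  transitivity (sum_f_R0 (fun k => (-1)^k * sum_f_R0 (fun l => h^l / INR (fact l) * psi d (d - l) k x) d) d).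
  - apply sum_eq. intros k Hk. f_equal.
    transitivity (sum_f_R0 (fun i => sum_f_R0 (fun l =>
       (-1)^i * cb (S d) i * (h^l / INR (fact l) * ((x + INR k - INR i)^(d-l) / INR (fact (d-l))))) d) k).
    + apply sum_eq. intros i Hi.
      replace (x + h + INR k - INR i) with (h + (x + INR k - INR i)) by ring.
      unfold Rdiv at 1. rewrite Rmult_assoc. fold (Rdiv ((h + (x + INR k - INR i)) ^ d) (INR (fact d))).
      rewrite binom_fact. rewrite <- sum_scal_l. reflexivity.
    + rewrite sum_swap. apply sum_eq. intros l Hl. unfold psi.
      rewrite <- sum_scal_l. apply sum_eq. intros. unfold Rdiv. ring.
  - transitivity (sum_f_R0 (fun l => sum_f_R0 (fun k => (-1)^k * (h^l / INR (fact l) * psi d (d - l) k x)) d) d).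
    + rewrite <- sum_swap. apply sum_eq. intros. rewrite <- sum_scal_l. reflexivity.
    + apply sum_eq. intros l Hl.
      transitivity (h^l / INR (fact l) * Psi d (d - l) x).
      * unfold Psi. rewrite <- sum_scal_l. apply sum_eq. intros. ring.
      * replace d with ((d - l) + l)%nat at 1 by lia. rewrite Psi_pow.
        rewrite Rpow_mult_distr. unfold Rdiv. ring.
Qed.

Lemma psi_shift1 d k y :
  psi d d k (y + 1) = psi d d (S k) y - (-1)^(S k) * cb (S d) (S k) * y^d / INR (fact d).
Proof.
  unfold psi. rewrite tech5. rewrite !S_INR.
  replace (y + (INR k + 1) - (INR k + 1)) with y by ring.
  assert (sum_f_R0 (fun i => (-1) ^ i * cb (S d) i * (y + 1 + INR k - INR i) ^ d / INR (fact d)) k =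
          sum_f_R0 (fun i => (-1) ^ i * cb (S d) i * (y + (INR k + 1) - INR i) ^ d / INR (fact d)) k).
  { apply sum_eq. intros. replace (y + 1 + INR k - INR i) with (y + (INR k + 1) - INR i) by ring. reflexivity. }
  rewrite H. ring.
Qed.

Lemma P_R2 d y : P d y + P d (y + 1) = 2^(S d) * y^d / INR (fact d).
Proof.
  unfold P at 2. unfold Psi.
  transitivity (P d y + (sum_f_R0 (fun k => (-1)^k * psi d d (S k) y) d +
      y^d / INR (fact d) * sum_f_R0 (fun k => cb (S d) (S k)) d)).
  - f_equal. rewrite <- sum_scal_l, <- sum_plus. apply sum_eq. intros k _.
    rewrite psi_shift1. simpl pow. unfold Rdiv.
    pose proof (neg1_pow_sq k) as Hs.
    transitivity ((-1) ^ k * psi d d (S k) y + ((-1)^k * (-1)^k) * y ^ d * / INR (fact d) * cb (S d) (S k)); [ring|].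
    rewrite Hs. ring.
  - rewrite (alt_shift (fun k => psi d d k y)). rewrite tech5, psi_vanish by lia.
    assert (Hc : sum_f_R0 (fun k => cb (S d) (S k)) d = 2^(S d) - 1).
    { pose proof (cb_sum (S d)) as HS. rewrite sum_front in HS. simpl cb in HS at 1.
      lra. }
    rewrite Hc.
    assert (H0 : psi d d 0 y = y^d / INR (fact d)).
    { unfold psi. simpl. replace (y + 0 - 0) with y by ring. unfold Rdiv. ring. }
    rewrite H0. change (sum_f_R0 (fun k => (-1)^k * psi d d k y) d) with (P d y).
    simpl pow. field. apply INR_fact_neq_0.
Qed.

Lemma Bspl_psi d k x : (k <= d)%nat -> 0 <= x < 1 -> Bspl d (INR k + x) = psi d d k x.
Proof.
  intros Hk Hx. unfold Bspl, psi.
  rewrite (sum_zero_tail _ k (S d)); [| lia | ].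
  2:{ intros i Hi; unfold tpow.
    destruct (Rle_dec (INR i) (INR k + x)) as [Hle|]; [|ring].
    assert (INR k + 1 <= INR i) by (rewrite <- S_INR; apply le_INR; lia); lra. }
  rewrite <- sum_scal_l. apply sum_eq. intros i Hi. unfold tpow.
  destruct (Rle_dec (INR i) (INR k + x)) as [Hle|Hn].
  - rewrite cb_C by lia. replace (INR k + x - INR i) with (x + INR k - INR i) by ring.
    unfold Rdiv. ring.
  - exfalso. apply Hn. assert (INR i <= INR k) by (apply le_INR; lia). lra.
Qed.

Lemma tpow_sym_term d X i : (1 <= d)%nat -> (i <= S d)%nat ->
  (-1)^i * C (S d) i * tpow X i d -
  (-1)^(S d - i) * C (S d) (S d - i) * tpow (INR (S d) - X) (S d - i) d =
  (-1)^i * cb (S d) i * (X - INR i)^d.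
Proof.
  intros Hd Hi. rewrite <- pascal_step1 by lia. rewrite cb_C by lia.
  rewrite neg1_pow_minus by lia. unfold tpow. rewrite minus_INR by lia.
  assert (Hpd : (-1)^(S d) = - (-1)^d) by (simpl; ring).
  rewrite Hpd.
  destruct (Rle_dec (INR i) X) as [H1|H1];
  destruct (Rle_dec (INR (S d) - INR i) (INR (S d) - X)) as [H2|H2].
  - assert (X = INR i) by lra. subst X.
    replace (INR i - INR i) with 0 by ring.
    replace (INR (S d) - INR i - (INR (S d) - INR i)) with 0 by ring.
    rewrite pow_i by lia. ring.
  - ring.
  - replace (INR (S d) - X - (INR (S d) - INR i)) with (-1 * (X - INR i)) by ring.
    rewrite Rpow_mult_distr. pose proof (neg1_pow_sq d). 
    transitivity ((-1) ^ i * C (S d) i * (X - INR i) ^ d * ((-1)^d * (-1)^d)); [ring|].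
    rewrite H. ring.
  - lra.
Qed.

Lemma Bspl_sym d X : (1 <= d)%nat -> Bspl d X = Bspl d (INR (S d) - X).
Proof.
  intros Hd. unfold Bspl. apply Rminus_diag_uniq.
  rewrite <- Rmult_minus_distr_l.
  rewrite (sum_rev (fun i => (-1) ^ i * C (S d) i * tpow (INR (S d) - X) i d)).
  rewrite <- minus_sum.
  rewrite (sum_eq _ (fun i => (-1)^i * cb (S d) i * (X - INR i)^d)).
  - rewrite delta_poly by lia. ring.
  - intros i Hi. apply tpow_sym_term; lia.
Qed.

Lemma sum_1_to_ext (f g : nat -> R) r :
  (forall j, (1 <= j <= r)%nat -> f j = g j) -> sum_1_to f r = sum_1_to g r.
Proof.
  induction r; intros H; simpl; [reflexivity|].
  rewrite IHr by (intros; apply H; lia). rewrite H by lia. reflexivity.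
Qed.

Lemma sum_1_to_scal (f : nat -> R) c r : sum_1_to (fun j => c * f j) r = c * sum_1_to f r.
Proof. induction r; simpl; [ring|]. rewrite IHr. ring. Qed.

Lemma fold_sum (w : nat -> R) r : forall a,
  sum_f_R0 (fun m => w (a + m)%nat) (2 * r) =
  w (a + r)%nat + sum_1_to (fun j => w (a + r + j)%nat + w (a + r - j)%nat) r.
Proof.
  induction r; intros a.
  - simpl. rewrite !Nat.add_0_r. ring.
  - replace (2 * S r)%nat with (S (S (2 * r))) by lia.
    rewrite tech5, sum_front.
    rewrite (sum_eq (fun i => w (a + S i)%nat) (fun m => w (S a + m)%nat)) by (intros; f_equal; lia).
    rewrite IHr. simpl sum_1_to.
    rewrite (sum_1_to_ext (fun j => w (S a + r + j)%nat + w (S a + r - j)%nat)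
                          (fun j => w (a + S r + j)%nat + w (a + S r - j)%nat)) by (intros; f_equal; f_equal; lia).
    replace (S a + r)%nat with (a + S r)%nat by lia.
    replace (a + S (S (2 * r)))%nat with (a + S r + S r)%nat by lia.
    replace (a + S r - S r)%nat with a by lia. rewrite Nat.add_0_r. ring.
Qed.

Lemma neg1_pow_plus2 a j : (-1)^(a + 2 * j) = (-1)^a.
Proof. rewrite pow_add, pow_mult. replace ((-1)^2) with 1 by ring. rewrite pow1. ring. Qed.

Lemma lambda_odd r : lambda_inf (S (2*r)) = (-1)^(S r) * P (S (2*r)) 0.
Proof.
  set (d := S (2*r)).
  set (w := fun k => (-1)^k * Bspl d (INR k + 0)).
  assert (HP : P d 0 = sum_f_R0 w d).
  { unfold P, Psi, w. apply sum_eq. intros k Hk. rewrite Bspl_psi by (try lia; lra).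
    f_equal. }
  assert (Hw0 : w 0%nat = 0).
  { unfold w. rewrite Bspl_psi by (try lia; lra). unfold psi, d. simpl.
    unfold Rdiv; ring. }
  assert (Hsum : sum_f_R0 w d = sum_f_R0 (fun m => w (1 + m)%nat) (2 * r)).
  { unfold d. rewrite sum_front, Hw0. rewrite Rplus_0_l. apply sum_eq. intros. reflexivity. }
  rewrite fold_sum in Hsum.
  assert (Ht : forall j, tcoef d j = Bspl d (INR (1 + r + j) + 0)).
  { intros j. unfold tcoef. f_equal. unfold d. rewrite !plus_INR, S_INR, mult_INR. simpl. lra. }
  assert (Hpair : forall j, (1 <= j <= r)%nat ->
     w (1 + r + j)%nat + w (1 + r - j)%nat = (-1)^(S r) * (2 * ((-1)^j * tcoef d j))).
  { intros j Hj. unfold w. rewrite Ht.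
    rewrite (Bspl_sym d (INR (1 + r - j) + 0)) by (unfold d; lia).
    replace (INR (S d) - (INR (1 + r - j) + 0)) with (INR (1 + r + j) + 0).
    2:{ rewrite minus_INR by lia. unfold d. rewrite !plus_INR, !S_INR, mult_INR. simpl. lra. }
    replace ((-1)^(1 + r - j)) with ((-1)^(1 + r + j)).
    2:{ replace (1 + r + j)%nat with ((1 + r - j) + 2 * j)%nat by lia. apply neg1_pow_plus2. }
    rewrite pow_add. simpl pow. ring. }
  rewrite (sum_1_to_ext _ (fun j => (-1)^(S r) * (2 * ((-1)^j * tcoef d j)))) in Hsum by exact Hpair.
  rewrite sum_1_to_scal, sum_1_to_scal in Hsum.
  unfold lambda_inf. replace (Nat.div2 d) with r by (unfold d; symmetry; apply Nat.div2_succ_double).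
  rewrite HP, Hsum. unfold w. replace (INR (1 + r) + 0) with (INR (1 + r + 0) + 0) by (rewrite Nat.add_0_r; reflexivity).
  rewrite <- Ht.
  replace ((-1)^(S r) * ((-1) ^ (1 + r) * tcoef d 0 + (-1) ^ S r * (2 * sum_1_to (fun j => (-1) ^ j * tcoef d j) r)))
    with (((-1)^(S r) * (-1)^(S r)) * (tcoef d 0 + 2 * sum_1_to (fun j => (-1) ^ j * tcoef d j) r)) by (simpl; ring).
  rewrite neg1_pow_sq. ring.
Qed.

Lemma lambda_even r : lambda_inf (2*r) = (-1)^r * P (2*r) (1/2).
Proof.
  set (d := (2*r)%nat).
  set (w := fun k => (-1)^k * Bspl d (INR k + 1/2)).
  assert (HP : P d (1/2) = sum_f_R0 w d).
  { unfold P, Psi, w. apply sum_eq. intros k Hk. rewrite Bspl_psi by (try lia; lra).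
    f_equal. }
  assert (Hsum : sum_f_R0 w d = sum_f_R0 (fun m => w (0 + m)%nat) (2 * r)).
  { unfold d. apply sum_eq. intros. reflexivity. }
  rewrite fold_sum in Hsum.
  assert (Ht : forall j, tcoef d j = Bspl d (INR (0 + r + j) + 1/2)).
  { intros j. unfold tcoef. f_equal. unfold d. rewrite !plus_INR, mult_INR. simpl. lra. }
  assert (Hpair : forall j, (1 <= j <= r)%nat ->
     w (0 + r + j)%nat + w (0 + r - j)%nat = (-1)^r * (2 * ((-1)^j * tcoef d j))).
  { intros j Hj. unfold w. rewrite Ht.
    rewrite (Bspl_sym d (INR (0 + r - j) + 1/2)) by (unfold d; lia).
    replace (INR (S d) - (INR (0 + r - j) + 1/2)) with (INR (0 + r + j) + 1/2).
    2:{ rewrite minus_INR by lia. unfold d. rewrite !plus_INR, !S_INR, mult_INR. simpl. lra. }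
    replace ((-1)^(0 + r - j)) with ((-1)^(0 + r + j)).
    2:{ replace (0 + r + j)%nat with ((0 + r - j) + 2 * j)%nat by lia. apply neg1_pow_plus2. }
    rewrite pow_add. simpl pow. ring. }
  rewrite (sum_1_to_ext _ (fun j => (-1)^r * (2 * ((-1)^j * tcoef d j)))) in Hsum by exact Hpair.
  rewrite sum_1_to_scal, sum_1_to_scal in Hsum.
  unfold lambda_inf. replace (Nat.div2 d) with r by (unfold d; symmetry; apply Nat.div2_double).
  rewrite HP, Hsum. unfold w. replace (INR (0 + r) + 1/2) with (INR (0 + r + 0) + 1/2) by (rewrite Nat.add_0_r; reflexivity).
  rewrite <- Ht.
  replace ((-1)^r * ((-1) ^ (0 + r) * tcoef d 0 + (-1) ^ r * (2 * sum_1_to (fun j => (-1) ^ j * tcoef d j) r)))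
    with (((-1)^r * (-1)^r) * (tcoef d 0 + 2 * sum_1_to (fun j => (-1) ^ j * tcoef d j) r)) by (simpl; ring).
  rewrite neg1_pow_sq. ring.
Qed.

Definition gam (j : nat) : R := if Nat.even j then (-1)^(Nat.div2 j) / INR (fact j) else 0.
Definition sig (j : nat) : R := if Nat.odd j then (-1)^(Nat.div2 j) / INR (fact j) else 0.
Definition conv (a : nat -> R) (n : nat) : R := sum_f_R0 (fun p => a p * gam (n - p)%nat) n.

Lemma even_double a : Nat.even (2 * a) = true.
Proof. induction a; [reflexivity|]. replace (2 * S a)%nat with (S (S (2 * a))) by lia. exact IHa. Qed.
Lemma even_sdouble a : Nat.even (S (2 * a)) = false.
Proof. induction a; [reflexivity|]. replace (S (2 * S a))%nat with (S (S (S (2 * a)))) by lia. exact IHa. Qed.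

Lemma gam_even a : gam (2 * a) = (-1)^a / INR (fact (2 * a)).
Proof. unfold gam. rewrite even_double, Nat.div2_double. reflexivity. Qed.
Lemma gam_odd a : gam (S (2 * a)) = 0.
Proof. unfold gam. rewrite even_sdouble. reflexivity. Qed.
Lemma sig_even a : sig (2 * a) = 0.
Proof. unfold sig, Nat.odd. rewrite even_double. reflexivity. Qed.
Lemma sig_odd a : sig (S (2 * a)) = (-1)^a / INR (fact (S (2 * a))).
Proof. unfold sig, Nat.odd. rewrite even_sdouble, Nat.div2_succ_double. reflexivity. Qed.

Lemma parity l : exists a, l = (2 * a)%nat \/ l = S (2 * a).
Proof.
  destruct (Nat.Even_or_Odd l) as [[a Ha]|[a Ha]]; exists a; [left|right]; lia.
Qed.

Lemma conv_rev a n : conv a n = sum_f_R0 (fun l => a (n - l)%nat * gam l) n.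
Proof.
  unfold conv. rewrite sum_rev. apply sum_eq. intros l Hl. f_equal. f_equal. lia.
Qed.

Lemma rec_even b : conv lambda_inf (2 * b) = 0 ^ (2 * b).
Proof.
  set (n := (2 * b)%nat). rewrite conv_rev.
  transitivity (sum_f_R0 (fun l => (-1)^b / 2 *
     ((2 * (1/2))^l / INR (fact l) * P (n - l) (1/2) + (2 * (-1/2))^l / INR (fact l) * P (n - l) (1/2))) n).
  - apply sum_eq. intros l Hl. destruct (parity l) as [a [-> | ->]].
    + rewrite gam_even. replace (n - 2 * a)%nat with (2 * (b - a))%nat by (unfold n in *; lia).
      rewrite lambda_even.
      replace (2 * (1/2)) with 1 by field. replace (2 * (-1/2)) with (-1) by field.
      rewrite pow1, pow_mult. replace ((-1)^2) with 1 by ring. rewrite pow1.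
      replace ((-1)^b) with ((-1)^(b - a) * (-1)^a) by (rewrite <- pow_add; f_equal; unfold n in *; lia).
      field. apply INR_fact_neq_0.
    + rewrite gam_odd. replace (2 * (-1/2)) with (-1) by field. replace (2 * (1/2)) with 1 by field.
      rewrite pow1.
      replace ((-1)^(S (2*a))) with (-1) by (change (S (2*a)) with (1 + 2*a)%nat; rewrite neg1_pow_plus2; ring).
      field. apply INR_fact_neq_0.
  - rewrite sum_scal_l, sum_plus. rewrite <- !taylor.
    replace (1/2 + 1/2) with (0 + 1) by field. replace (1/2 + -1/2) with 0 by field.
    rewrite Rplus_comm, P_R2. unfold n. destruct b.
    + simpl. field.
    + rewrite !pow_i by lia. unfold Rdiv. ring.
Qed.

Lemma rec_odd b : conv lambda_inf (S (2 * b)) = sig (S (2 * b)).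
Proof.
  rewrite sig_odd. set (n := S (2 * b)). rewrite conv_rev.
  transitivity (sum_f_R0 (fun l => (-1)^(S b) / 2 *
     ((2 * (1/2))^l / INR (fact l) * P (n - l) 0 + (2 * (-1/2))^l / INR (fact l) * P (n - l) 0)) n).
  - apply sum_eq. intros l Hl. destruct (parity l) as [a [-> | ->]].
    + rewrite gam_even. replace (n - 2 * a)%nat with (S (2 * (b - a)))%nat by (unfold n in *; lia).
      rewrite lambda_odd.
      replace (2 * (1/2)) with 1 by field. replace (2 * (-1/2)) with (-1) by field.
      rewrite pow1, pow_mult. replace ((-1)^2) with 1 by ring. rewrite pow1.
      replace ((-1)^(S b)) with ((-1)^(S (b - a)) * (-1)^a) by (rewrite <- pow_add; f_equal; unfold n in *; lia).
      field. apply INR_fact_neq_0.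
    + rewrite gam_odd. replace (2 * (-1/2)) with (-1) by field. replace (2 * (1/2)) with 1 by field.
      rewrite pow1.
      replace ((-1)^(S (2*a))) with (-1) by (change (S (2*a)) with (1 + 2*a)%nat; rewrite neg1_pow_plus2; ring).
      field. apply INR_fact_neq_0.
  - rewrite sum_scal_l, sum_plus. rewrite <- !taylor.
    replace (0 + 1/2) with (-1/2 + 1) by field. replace (0 + -1/2) with (-1/2) by field.
    rewrite Rplus_comm, P_R2.
    replace (-1/2) with (-1 * / 2) by field. rewrite Rpow_mult_distr, pow_inv.
    unfold n. rewrite neg1_pow_plus2 with (a := 1%nat) (j := b) || idtac.
    replace ((-1)^(S (2*b))) with (-1) by (replace (S (2*b)) with (1 + 2*b)%nat by lia; rewrite neg1_pow_plus2; ring).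
    simpl pow. field. split; [apply INR_fact_neq_0|]. apply pow_nonzero. lra.
Qed.

Lemma infinite_sum_ext (f g : nat -> R) l :
  (forall n, f n = g n) -> infinite_sum f l -> infinite_sum g l.
Proof.
  intros H Hs eps He. destruct (Hs eps He) as [N HN]. exists N. intros n Hn.
  rewrite <- (sum_eq f g) by (intros; apply H). apply HN; auto.
Qed.

Lemma cos_partial t m :
  sum_f_R0 (fun n => gam n * t^n) (2 * m) = sum_f_R0 (fun i => cos_n i * (Rsqr t)^i) m /\
  sum_f_R0 (fun n => gam n * t^n) (S (2 * m)) = sum_f_R0 (fun i => cos_n i * (Rsqr t)^i) m.
Proof.
  induction m.
  - simpl. unfold gam, cos_n. simpl. split; field.
  - destruct IHm as [H1 H2].
    assert (H3 : sum_f_R0 (fun n => gam n * t^n) (2 * S m) = sum_f_R0 (fun i => cos_n i * (Rsqr t)^i) (S m)).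
    { replace (2 * S m)%nat with (S (S (2 * m))) by lia. rewrite tech5, H2, tech5.
      f_equal. replace (S (S (2 * m))) with (2 * S m)%nat by lia. rewrite gam_even.
      unfold cos_n, Rsqr. rewrite pow_mult. f_equal. f_equal. simpl. ring. }
    split; [exact H3|]. rewrite tech5, H3, gam_odd. ring.
Qed.

Lemma cos_series t : infinite_sum (fun n => gam n * t^n) (cos t).
Proof.
  unfold cos. destruct (exist_cos (Rsqr t)) as [a Ha]. unfold cos_in in Ha.
  intros eps He. destruct (Ha eps He) as [N HN]. exists (2 * N)%nat. intros n Hn.
  destruct (parity n) as [m [-> | ->]].
  - rewrite (proj1 (cos_partial t m)). apply HN. lia.
  - rewrite (proj2 (cos_partial t m)). apply HN. lia.
Qed.

Lemma sin_partial t m :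
  sum_f_R0 (fun n => sig n * t^n) (S (2 * m)) = t * sum_f_R0 (fun i => sin_n i * (Rsqr t)^i) m /\
  sum_f_R0 (fun n => sig n * t^n) (2 * S m) = t * sum_f_R0 (fun i => sin_n i * (Rsqr t)^i) m.
Proof.
  induction m.
  - simpl. unfold sig, sin_n. simpl. split; field.
  - destruct IHm as [H1 H2].
    assert (H3 : sum_f_R0 (fun n => sig n * t^n) (S (2 * S m)) = t * sum_f_R0 (fun i => sin_n i * (Rsqr t)^i) (S m)).
    { rewrite tech5, H2, tech5. rewrite Rmult_plus_distr_l.
      f_equal. rewrite sig_odd.
      unfold sin_n, Rsqr. replace (2 * S m + 1)%nat with (S (2 * S m)) by lia.
      replace (S (2 * S m)) with (1 + 2 * S m)%nat at 2 by lia.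
      rewrite pow_add, pow_mult, pow_1. replace (t^2) with (t*t) by ring. unfold Rdiv. ring. }
    split; [exact H3|]. replace (2 * S (S m))%nat with (S (S (2 * S m))) by lia.
    rewrite tech5, H3. replace (S (S (2 * S m))) with (2 * S (S m))%nat by lia. rewrite sig_even. ring.
Qed.

Lemma sin_series t : infinite_sum (fun n => sig n * t^n) (sin t).
Proof.
  unfold sin. destruct (exist_sin (Rsqr t)) as [a Ha]. unfold sin_in in Ha.
  intros eps He.
  assert (He' : 0 < eps / (Rabs t + 1)) by (apply Rdiv_lt_0_compat; [lra|]; pose proof (Rabs_pos t); lra).
  destruct (Ha _ He') as [N HN]. exists (2 * S N)%nat. intros n Hn.
  assert (Hb : forall m, (m >= N)%nat -> R_dist (t * sum_f_R0 (fun i => sin_n i * (Rsqr t)^i) m) (t * a) < eps).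
  { intros m Hm. specialize (HN m Hm). unfold R_dist in *.
    rewrite <- Rmult_minus_distr_l, Rabs_mult.
    pose proof (Rabs_pos t).
    apply Rle_lt_trans with (Rabs t * (eps / (Rabs t + 1))).
    - apply Rmult_le_compat_l; lra.
    - apply Rlt_le_trans with ((Rabs t + 1) * (eps / (Rabs t + 1))).
      + apply Rmult_lt_compat_r; lra.
      + right. field. lra. }
  destruct (parity n) as [m [-> | ->]].
  - destruct m as [|m]; [lia|]. rewrite (proj2 (sin_partial t m)). apply Hb. lia.
  - rewrite (proj1 (sin_partial t m)). apply Hb. lia.
Qed.

Lemma terms_bounded f l : infinite_sum f l -> exists M, 0 <= M /\ forall n, Rabs (f n) <= M.
Proof.
  intros Hs. destruct (Hs 1 ltac:(lra)) as [N HN].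
  exists (sum_f_R0 (fun i => Rabs (f i)) N + 2). split.
  - pose proof (sum_nonneg (fun i => Rabs (f i)) N (fun j => Rabs_pos _)). lra.
  - intros n. destruct (le_lt_dec n N) as [Hn|Hn].
    + pose proof (term_le_sum (fun i => Rabs (f i)) N n (fun j => Rabs_pos _) Hn). simpl in H. lra.
    + destruct n as [|k]; [lia|].
      assert (E : f (S k) = sum_f_R0 f (S k) - sum_f_R0 f k) by (rewrite tech5; ring).
      pose proof (HN (S k) ltac:(lia)) as H1. pose proof (HN k ltac:(lia)) as H2.
      unfold R_dist in *. rewrite E.
      pose proof (sum_nonneg (fun i => Rabs (f i)) N (fun j => Rabs_pos _)).
      replace (sum_f_R0 f (S k) - sum_f_R0 f k) with ((sum_f_R0 f (S k) - l) - (sum_f_R0 f k - l)) by ring.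
      pose proof (Rabs_triang (sum_f_R0 f (S k) - l) (- (sum_f_R0 f k - l))). rewrite Rabs_Ropp in H0.
      unfold Rminus at 1. lra.
Qed.

Lemma geom_half k : sum_f_R0 (fun i => (/2)^i) k = 2 - (/2)^k.
Proof. induction k; simpl; [field|]. rewrite IHk. field. Qed.

Lemma tail_bound (c : nat -> R) (F : R -> R) rho : 0 < rho ->
  (forall t, Rabs t < rho -> infinite_sum (fun n => c n * t^n) (F t)) ->
  forall N, exists K delta, 0 <= K /\ 0 < delta /\ forall t, Rabs t < delta ->
    Rabs (F t - sum_f_R0 (fun n => c n * t^n) N) <= K * Rabs t ^ (S N).
Proof.
  intros Hrho Hs N. set (r := rho / 2).
  assert (Hr : 0 < r) by (unfold r; lra).
  destruct (terms_bounded _ _ (Hs r ltac:(rewrite Rabs_right; unfold r; lra))) as [M [HM0 HM]].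
  assert (HrN : 0 < r ^ (S N)) by (apply pow_lt; lra).
  exists (2 * M / r ^ (S N)), (r / 2). split; [|split].
  - apply Rmult_le_pos; [lra|]. left. apply Rinv_0_lt_compat. exact HrN.
  - lra.
  - intros t Ht. set (q := Rabs t / r).
    assert (Hq : 0 <= q <= /2).
    { unfold q. pose proof (Rabs_pos t). split.
      - apply Rmult_le_pos; [lra|]. left; apply Rinv_0_lt_compat; lra.
      - apply Rmult_le_reg_r with r; [lra|]. unfold Rdiv. rewrite Rmult_assoc, Rinv_l by lra. lra. }
    assert (Hterm : forall n, Rabs (c n * t^n) <= M * q^n).
    { intros n. replace (Rabs (c n * t^n)) with (Rabs (c n * r^n) * q^n).
      - apply Rmult_le_compat_r; [apply pow_le; lra|]. apply HM.
      - rewrite !Rabs_mult, <- !RPow_abs. rewrite (Rabs_right r) by lra.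
        unfold q. unfold Rdiv. rewrite Rpow_mult_distr, pow_inv. field. apply pow_nonzero. lra. }
    assert (Hpart : forall m, (N < m)%nat ->
       Rabs (sum_f_R0 (fun n => c n * t^n) m - sum_f_R0 (fun n => c n * t^n) N) <= 2 * M / r^(S N) * Rabs t ^ (S N)).
    { intros m Hm. rewrite (tech2 _ N m Hm).
      replace (sum_f_R0 (fun n => c n * t ^ n) N + sum_f_R0 (fun i => c (S N + i)%nat * t ^ (S N + i)) (m - S N) -
         sum_f_R0 (fun n => c n * t ^ n) N) with (sum_f_R0 (fun i => c (S N + i)%nat * t ^ (S N + i)) (m - S N)) by ring.
      eapply Rle_trans; [apply Rsum_abs|].
      eapply Rle_trans; [apply sum_Rle with (Bn := fun i => M * q^(S N) * (/2)^i)|].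
      - intros i _. eapply Rle_trans; [apply Hterm|]. rewrite pow_add, Rmult_assoc.
        apply Rmult_le_compat_l; [lra|]. apply Rmult_le_compat_l; [apply pow_le; lra|].
        apply pow_incr. lra.
      - rewrite sum_scal_l, geom_half.
        replace (2 * M / r ^ S N * Rabs t ^ S N) with (M * q ^ S N * 2).
        + apply Rmult_le_compat_l.
          * apply Rmult_le_pos; [lra|apply pow_le; lra].
          * pose proof (pow_le (/2) (m - S N) ltac:(lra)). lra.
        + unfold q, Rdiv. rewrite Rpow_mult_distr, pow_inv. field. apply pow_nonzero. lra. }
    set (B := 2 * M / r ^ S N * Rabs t ^ S N) in *.
    destruct (Rle_lt_dec (Rabs (F t - sum_f_R0 (fun n => c n * t ^ n) N)) B) as [Hle|Hlt]; [exact Hle|].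
    exfalso. set (D := Rabs (F t - sum_f_R0 (fun n => c n * t ^ n) N) - B).
    assert (HD : 0 < D) by (unfold D; lra).
    destruct (Hs t ltac:(unfold r in Ht; lra) D HD) as [N1 HN1].
    set (m := S (max N1 N)).
    specialize (HN1 m ltac:(unfold m; lia)). specialize (Hpart m ltac:(unfold m; lia)).
    unfold R_dist in HN1.
    pose proof (Rabs_triang (F t - sum_f_R0 (fun n => c n * t ^ n) m)
                            (sum_f_R0 (fun n => c n * t ^ n) m - sum_f_R0 (fun n => c n * t ^ n) N)).
    replace (F t - sum_f_R0 (fun n => c n * t ^ n) m + (sum_f_R0 (fun n => c n * t ^ n) m - sum_f_R0 (fun n => c n * t ^ n) N))
      with (F t - sum_f_R0 (fun n => c n * t ^ n) N) in H by ring.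
    rewrite <- Rabs_Ropp in HN1.
    replace (- (sum_f_R0 (fun n => c n * t ^ n) m - F t)) with (F t - sum_f_R0 (fun n => c n * t ^ n) m) in HN1 by ring.
    unfold D in HN1. lra.
Qed.

Lemma pow_abs_le1 t p : Rabs t <= 1 -> Rabs t ^ p <= 1.
Proof. intros H. rewrite <- (pow1 p). apply pow_incr. pose proof (Rabs_pos t). lra. Qed.

Lemma prod_rem (c : nat -> R) n : exists R0, 0 <= R0 /\ forall t, Rabs t <= 1 ->
  Rabs (sum_f_R0 (fun p => c p * t^p) n * sum_f_R0 (fun j => gam j * t^j) n
        - sum_f_R0 (fun k => conv c k * t^k) n) <= R0 * Rabs t ^ (S n).
Proof.
  destruct n as [|n].
  - exists 0. split; [lra|]. intros t _. unfold conv. simpl.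
    replace (c 0%nat * 1 * (gam 0 * 1) - c 0%nat * gam 0 * 1) with 0 by ring.
    rewrite Rabs_R0. lra.
  - set (N := S n).
    exists (sum_f_R0 (fun k => sum_f_R0 (fun l => Rabs (c (S (l + k))) * Rabs (gam (N - l)%nat)) (pred (N - k))) (pred N)).
    split.
    { apply sum_nonneg. intros. apply sum_nonneg. intros. apply Rmult_le_pos; apply Rabs_pos. }
    intros t Ht.
    rewrite (cauchy_finite (fun p => c p * t^p) (fun j => gam j * t^j) N) by (unfold N; lia).
    replace (sum_f_R0 (fun k => sum_f_R0 (fun p => c p * t ^ p * (gam (k - p)%nat * t ^ (k - p))) k) N)
      with (sum_f_R0 (fun k => conv c k * t^k) N).
    2:{ apply sum_eq. intros k _. unfold conv. rewrite Rmult_comm, <- sum_scal_l. apply sum_eq.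
        intros p Hp. replace (t^k) with (t^p * t^(k-p)) by (rewrite <- pow_add; f_equal; lia). ring. }
    match goal with |- Rabs (?a + ?b - ?a) <= _ => replace (a + b - a) with b by ring end.
    eapply Rle_trans; [apply Rsum_abs|]. rewrite Rmult_comm, <- sum_scal_l.
    apply sum_Rle. intros k Hk.
    eapply Rle_trans; [apply Rsum_abs|]. rewrite <- sum_scal_l.
    apply sum_Rle. intros l Hl.
    replace (c (S (l + k)) * t ^ S (l + k) * (gam (N - l)%nat * t ^ (N - l)))
      with (c (S (l + k)) * gam (N - l)%nat * (t ^ S N * t ^ k)).
    2:{ rewrite <- pow_add. replace (S N + k)%nat with (S (l + k) + (N - l))%nat by lia. rewrite pow_add. ring. }
    rewrite !Rabs_mult, <- !RPow_abs.
    pose proof (pow_abs_le1 t k Ht). pose proof (pow_le (Rabs t) (S N) (Rabs_pos t)).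
    pose proof (Rabs_pos (c (S (l + k)))). pose proof (Rabs_pos (gam (N - l)%nat)).
    replace (Rabs t ^ S N * (Rabs (c (S (l + k))) * Rabs (gam (N - l)%nat)))
      with (Rabs (c (S (l + k))) * Rabs (gam (N - l)%nat) * (Rabs t ^ S N * 1)) by ring.
    apply Rmult_le_compat_l; [apply Rmult_le_pos; lra|].
    apply Rmult_le_compat_l; lra.
Qed.

Lemma sum_low_zero (d : nat -> R) t n : (forall k, (k < n)%nat -> d k = 0) ->
  sum_f_R0 (fun k => d k * t^k) n = d n * t^n.
Proof.
  intros H. destruct n; [reflexivity|]. rewrite tech5, sum_0; [ring|].
  intros. rewrite H by lia. ring.
Qed.

Lemma abs3 a b c : Rabs (- a - b + c) <= Rabs a + Rabs b + Rabs c.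
Proof.
  pose proof (Rabs_triang (- a - b) c). pose proof (Rabs_triang (- a) (- b)).
  rewrite !Rabs_Ropp in H0. unfold Rminus in *. lra.
Qed.

Lemma extract (c g : nat -> R) (F G : R -> R) :
  (forall N, exists K delta, 0 <= K /\ 0 < delta /\ forall t, Rabs t < delta ->
    Rabs (F t - sum_f_R0 (fun n => c n * t^n) N) <= K * Rabs t ^ (S N)) ->
  (forall N, exists K delta, 0 <= K /\ 0 < delta /\ forall t, Rabs t < delta ->
    Rabs (G t - sum_f_R0 (fun n => g n * t^n) N) <= K * Rabs t ^ (S N)) ->
  (exists d0, 0 < d0 /\ forall t, Rabs t < d0 -> F t * cos t = G t) ->
  forall n, (forall k, (k < n)%nat -> conv c k = g k) -> conv c n = g n.
Proof.
  intros HF HG [d0 [Hd0 HFG]] n IH.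
  destruct (HF n) as [K1 [d1 [HK1 [Hd1 H1]]]].
  destruct (HG n) as [K3 [d3 [HK3 [Hd3 H3]]]].
  destruct (tail_bound gam cos 1 ltac:(lra) (fun t _ => cos_series t) n) as [K2 [d2 [HK2 [Hd2 H2]]]].
  destruct (prod_rem c n) as [R0 [HR0 HR]].
  set (SA := sum_f_R0 (fun p => Rabs (c p)) n).
  assert (HSA : 0 <= SA) by (apply sum_nonneg; intros; apply Rabs_pos).
  set (K := K1 + SA * K2 + K3 + R0).
  set (delta := Rmin (Rmin d0 d1) (Rmin (Rmin d2 d3) 1)).
  assert (Hdelta : 0 < delta) by (unfold delta; repeat apply Rmin_pos; lra).
  assert (Hdl : delta <= d0 /\ delta <= d1 /\ delta <= d2 /\ delta <= d3 /\ delta <= 1).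
  { unfold delta. pose proof (Rmin_l (Rmin d0 d1) (Rmin (Rmin d2 d3) 1)).
    pose proof (Rmin_r (Rmin d0 d1) (Rmin (Rmin d2 d3) 1)).
    pose proof (Rmin_l d0 d1). pose proof (Rmin_r d0 d1).
    pose proof (Rmin_l (Rmin d2 d3) 1). pose proof (Rmin_r (Rmin d2 d3) 1).
    pose proof (Rmin_l d2 d3). pose proof (Rmin_r d2 d3). repeat split; lra. }
  assert (Hmain : forall t, 0 < Rabs t < delta -> Rabs (conv c n - g n) <= K * Rabs t).
  { intros t [Ht0 Ht].
    set (A := sum_f_R0 (fun p => c p * t^p) n).
    set (B := sum_f_R0 (fun j => gam j * t^j) n).
    set (Hs := sum_f_R0 (fun k => g k * t^k) n).
    set (Cs := sum_f_R0 (fun k => conv c k * t^k) n).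
    assert (HA : Rabs A <= SA).
    { unfold A, SA. eapply Rle_trans; [apply Rsum_abs|]. apply sum_Rle. intros p _.
      rewrite Rabs_mult, <- RPow_abs. pose proof (pow_abs_le1 t p ltac:(lra)).
      pose proof (Rabs_pos (c p)). pose proof (pow_le (Rabs t) p (Rabs_pos t)).
      replace (Rabs (c p)) with (Rabs (c p) * 1) at 2 by ring. apply Rmult_le_compat_l; lra. }
    assert (Hcs : Cs - Hs = (conv c n - g n) * t^n).
    { unfold Cs, Hs. rewrite <- minus_sum.
      rewrite (sum_eq _ (fun k => (conv c k - g k) * t^k)) by (intros; ring).
      apply sum_low_zero. intros k Hk. rewrite IH by exact Hk. ring. }
    specialize (H1 t ltac:(lra)). specialize (H2 t ltac:(lra)). specialize (H3 t ltac:(lra)).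
    specialize (HR t ltac:(lra)). specialize (HFG t ltac:(lra)).
    fold A in H1. fold B in H2. fold Hs in H3. fold A B Cs in HR.
    pose proof (COS_bound t) as Hcos.
    assert (Hx : Cs - Hs = - (A * B - Cs) - ((F t - A) * cos t + A * (cos t - B)) + (G t - Hs)).
    { rewrite <- HFG. ring. }
    assert (Habs : Rabs (Cs - Hs) <= K * Rabs t ^ S n).
    { rewrite Hx. set (e := Rabs t ^ S n) in *.
      assert (He : 0 <= e) by (apply pow_le; apply Rabs_pos).
      eapply Rle_trans; [apply abs3|].
      pose proof (Rabs_triang ((F t - A) * cos t) (A * (cos t - B))) as T1.
      rewrite !Rabs_mult in T1.
      assert (Rabs (cos t) <= 1) by (apply Rabs_le; lra).
      assert (Rabs (F t - A) * Rabs (cos t) <= K1 * e).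
      { replace (K1 * e) with (K1 * e * 1) by ring. apply Rmult_le_compat; try apply Rabs_pos; lra. }
      assert (Rabs A * Rabs (cos t - B) <= SA * (K2 * e)).
      { apply Rmult_le_compat; try apply Rabs_pos; lra. }
      unfold K. lra. }
    rewrite Hcs, Rabs_mult, <- RPow_abs in Habs.
    assert (Hpn : 0 < Rabs t ^ n) by (apply pow_lt; lra).
    simpl pow in Habs.
    apply Rmult_le_reg_r with (Rabs t ^ n); [exact Hpn|]. nra. }
  destruct (Req_dec (conv c n) (g n)) as [Heq|Hne]; [exact Heq|].
  exfalso. set (D := Rabs (conv c n - g n)).
  assert (HD : 0 < D) by (apply Rabs_pos_lt; lra).
  assert (HK : 0 <= K) by (unfold K; pose proof (Rmult_le_pos SA K2 HSA HK2); lra).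
  set (t := Rmin (delta / 2) (D / (2 * (K + 1)))).
  assert (Htp : 0 < t) by (unfold t; apply Rmin_pos; [lra|apply Rdiv_lt_0_compat; lra]).
  assert (Ht1 : t <= delta / 2) by apply Rmin_l.
  assert (Ht2 : t <= D / (2 * (K + 1))) by apply Rmin_r.
  assert (HDe : D = Rabs (conv c n - g n)) by reflexivity. clearbody t. clearbody D. clearbody delta.
  specialize (Hmain t ltac:(rewrite Rabs_right; [split; lra | lra])). rewrite (Rabs_right t) in Hmain by lra.
  assert (K * t <= K * (D / (2 * (K + 1)))) by (apply Rmult_le_compat_l; lra).
  assert (K * (D / (2 * (K + 1))) < D).
  { apply Rmult_lt_reg_r with (2 * (K + 1)); [lra|].
    unfold Rdiv. replace (K * (D * / (2 * (K + 1))) * (2 * (K + 1))) with (K * D) by (field; lra). nra. }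
  rewrite <- HDe in Hmain. lra.
Qed.

Lemma cancel (a b : nat -> R) n :
  (forall p, (p < n)%nat -> a p * gam (n - p)%nat = b p * gam (n - p)%nat) ->
  conv a n = conv b n -> a n = b n.
Proof.
  intros H Hc. unfold conv in Hc. destruct n as [|n].
  - simpl in Hc. unfold gam in Hc. simpl in Hc. lra.
  - rewrite !tech5 in Hc. rewrite (sum_eq (fun p => a p * gam (S n - p)%nat) (fun p => b p * gam (S n - p)%nat)) in Hc
      by (intros; apply H; lia).
    rewrite Nat.sub_diag in Hc. unfold gam in Hc. simpl in Hc. lra.
Qed.

Lemma strong_conv (c g : nat -> R) :
  (forall n, (forall k, (k < n)%nat -> conv c k = g k) -> conv c n = g n) ->
  forall n, conv c n = g n.
Proof.
  intros H n. induction n as [n IH] using (well_founded_induction lt_wf). apply H. exact IH.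
Qed.

Lemma cos_pos_near t : Rabs t < 1 -> 0 < cos t.
Proof.
  intros H. pose proof PI2_1. apply Rabs_def2 in H. apply cos_gt_0; lra.
Qed.

Lemma ind_even (e : nat -> R) :
  (forall b, conv e (2 * b) = conv lambda_inf (2 * b)) ->
  forall n, Nat.even n = true -> e n = lambda_inf n.
Proof.
  intros Hc n. induction n as [n IH] using (well_founded_induction lt_wf). intros Hn.
  destruct (parity n) as [b [-> | ->]]; [|rewrite even_sdouble in Hn; discriminate].
  apply (cancel e lambda_inf (2 * b)); [|apply Hc].
  intros p Hp. destruct (parity p) as [a [-> | ->]].
  - rewrite IH; [reflexivity | exact Hp | apply even_double].
  - replace (2 * b - S (2 * a))%nat with (S (2 * (b - a - 1))) by lia. rewrite gam_odd. ring.
Qed.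

Lemma ind_odd (e : nat -> R) :
  (forall b, conv e (S (2 * b)) = conv lambda_inf (S (2 * b))) ->
  forall n, Nat.even n = false -> e n = lambda_inf n.
Proof.
  intros Hc n. induction n as [n IH] using (well_founded_induction lt_wf). intros Hn.
  destruct (parity n) as [b [-> | ->]]; [rewrite even_double in Hn; discriminate|].
  apply (cancel e lambda_inf (S (2 * b))); [|apply Hc].
  intros p Hp. destruct (parity p) as [a [-> | ->]].
  - replace (S (2 * b) - 2 * a)%nat with (S (2 * (b - a))) by lia. rewrite gam_odd. ring.
  - rewrite IH; [reflexivity | exact Hp | apply even_sdouble].
Qed.

Lemma zero_series t n : sum_f_R0 (fun k => 0 ^ k * t ^ k) n = 1.
Proof. induction n; simpl; [ring|]. rewrite IHn. ring. Qed.

Theorem mainTheorem1 (d : nat) (T E : nat -> R)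
  (hT : is_tangent_numbers T) (hE : is_euler_numbers E) :
  lambda_inf d = / INR (fact d) * (if Nat.odd d then T d else E d).
Proof.
  destruct hE as [rE [HrE HE]]. destruct hT as [rT [HrT HT]].
  set (e := fun n => E n / INR (fact n)).
  set (tau := fun n => T n / INR (fact n)).
  assert (HE' : forall t, Rabs t < rE -> infinite_sum (fun n => e n * t^n) (/ cos t)).
  { intros t Ht. eapply infinite_sum_ext; [|apply HE; exact Ht]. intros n. unfold e. unfold Rdiv. ring. }
  assert (HT' : forall t, Rabs t < rT -> infinite_sum (fun n => tau n * t^n) (tan t)).
  { intros t Ht. eapply infinite_sum_ext; [|apply HT; exact Ht]. intros n. unfold tau. unfold Rdiv. ring. }
  assert (Ce : forall n, conv e n = 0 ^ n).
  { apply strong_conv. apply (extract e (fun n => 0 ^ n) (fun t => / cos t) (fun _ => 1)).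
    - apply (tail_bound e (fun t => / cos t) rE HrE HE').
    - apply (tail_bound (fun n => 0 ^ n) (fun _ => 1) 1 ltac:(lra)).
      intros t _ eps Heps. exists 0%nat. intros n _. rewrite zero_series. unfold R_dist.
      rewrite Rminus_diag, Rabs_R0. exact Heps.
    - exists 1. split; [lra|]. intros t Ht. pose proof (cos_pos_near t Ht). field. lra. }
  assert (Ct : forall n, conv tau n = sig n).
  { apply strong_conv. apply (extract tau sig tan sin).
    - apply (tail_bound tau tan rT HrT HT').
    - apply (tail_bound sig sin 1 ltac:(lra)). intros t _. apply sin_series.
    - exists 1. split; [lra|]. intros t Ht. pose proof (cos_pos_near t Ht). unfold tan. field. lra. }
  unfold Nat.odd. destruct (Nat.even d) eqn:Hd; simpl.
  - assert (He : e d = lambda_inf d).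
    { apply ind_even; [|exact Hd]. intros b. rewrite Ce, rec_even. reflexivity. }
    unfold e in He. rewrite <- He. field. apply INR_fact_neq_0.
  - assert (Ht : tau d = lambda_inf d).
    { apply ind_odd; [|exact Hd]. intros b. rewrite Ct, rec_odd. reflexivity. }
    unfold tau in Ht. rewrite <- Ht. field. apply INR_fact_neq_0.
Qed.
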